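(* Let $k\le n$ be positive integers and let $\mathbb F$ be a field with at least $n+k-1$ elements. Then $J_{n,k}\subseteq \mathbf T(Z_{n,k})$.
   Context: $\mathbb F[\mathbf x_n]=\mathbb F[x_1,\dots,x_n]$. $h_d(x_1,\dots,x_i)=\sum_{1\le j_1\le\cdots\le j_d\le i}x_{j_1}\cdots x_{j_d}$ is the complete homogeneous symmetric polynomial and $e_d(\mathbf x_n)=e_d(x_1,\dots,x_n)$ the elementary symmetric polynomial. $J_{n,k}\subseteq\mathbb F[\mathbf x_n]$ is the ideal generated by $h_k(x_1),h_k(x_1,x_2),\dots,h_k(x_1,\dots,x_n)$ and $e_n(\mathbf x_n),e_{n-1}(\mathbf x_n),\dots,e_{n-k+1}(\mathbf x_n)$. Fix distinct elements $\alpha_1,\dots,\alpha_{n+k-1}\in\mathbb F$. $Z_{n,k}\subseteq\mathbb F^n$ is the set of points $(z_1,\dots,z_n)$ such that $z_i\in\{\alpha_1,\dots,\alpha_{k+i-1}\}$ for each $1\le i\le n$, the coordinates $z_1,\dots,z_n$ are pairwise distinct, and $\{\alpha_1,\dots,\alpha_k\}\subseteq\{z_1,\dots,z_n\}$. For a finite $Z\subseteq\mathbb F^n$, $\mathbf I(Z)$ is the ideal of polynomials vanishing on $Z$; for nonzero $f$, $\tau(f)$ denotes its top-degree homogeneous component; and $\mathbf T(Z)$ is the ideal generated by $\{\tau(f): f\in\mathbf I(Z)\setminus\{0\}\}$. *)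

(* Defs.v *)
(* Multivariate polynomials are not available in the installed
   libraries, so we represent a polynomial in F[x_0,...,x_{n-1}] by a finite
   list of terms (coefficient, exponent vector); the polynomial denoted is the
   one whose coefficient at monomial m is [coef p m] (sum of the coefficients of
   all terms with exponent m). *)
From HB Require Import structures.
From mathcomp Require Import all_boot all_order all_algebra.
Set Implicit Arguments. Unset Strict Implicit. Unset Printing Implicit Defensive.
Import Order.TTheory GRing.Theory Num.Theory.
Local Open Scope ring_scope.

Section MPoly.
Variables (F : fieldType) (n : nat).

Definition monom := {ffun 'I_n -> nat}.
Definition mpoly := seq (F * monom).

Definition mdeg (m : monom) : nat := (\sum_(i < n) m i)%N.
Definition madd (m1 m2 : monom) : monom := [ffun i => (m1 i + m2 i)%N].

Definition coef (p : mpoly) (m : monom) : F := \sum_(t <- p | t.2 == m) t.1.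

Definition padd (p q : mpoly) : mpoly := p ++ q.
Definition pmul (p q : mpoly) : mpoly :=
  [seq (t.1 * u.1, madd t.2 u.2) | t <- p, u <- q].

Definition peq (p q : mpoly) : Prop := forall m, coef p m = coef q m.

Definition pnonzero (p : mpoly) : Prop := exists m, coef p m != 0.

Definition peval (p : mpoly) (z : 'I_n -> F) : F :=
  \sum_(t <- p) t.1 * \prod_(i < n) z i ^+ t.2 i.

Definition pdeg (p : mpoly) : nat := \max_(t <- p | coef p t.2 != 0) mdeg t.2.
Definition tau (p : mpoly) : mpoly := [seq t <- p | mdeg t.2 == pdeg p].

Definition in_ideal (S : mpoly -> Prop) (g : mpoly) : Prop :=
  exists hs : seq (mpoly * mpoly),
    (forall x, x \in hs -> S x.2) /\
    peq g (flatten [seq pmul x.1 x.2 | x <- hs]).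

Definition vanishing_ideal (Z : ('I_n -> F) -> Prop) (f : mpoly) : Prop :=
  forall z, Z z -> peval f z = 0.
Definition T_ideal (Z : ('I_n -> F) -> Prop) : mpoly -> Prop :=
  in_ideal (fun g => exists f, [/\ vanishing_ideal Z f, pnonzero f & g = tau f]).

(* h_d(x_1,...,x_i): sum of all monomials of degree d in the first i variables
   (0-indexed: variables x_j with j < i) *)
Definition hcomplete (d i : nat) : mpoly :=
  [seq (1, [ffun j => nat_of_ord (m j)] : monom)
   | m : {ffun 'I_n -> 'I_d.+1} <- enum [pred m : {ffun 'I_n -> 'I_d.+1} |
     ((\sum_(j < n) nat_of_ord (m j))%N == d) && [forall j : 'I_n, (i <= j)%N ==> (nat_of_ord (m j) == 0%N)]]].

Definition elem (d : nat) : mpoly :=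
  [seq (1, [ffun j => nat_of_bool (j \in A)] : monom) | A : {set 'I_n} <- enum [pred A : {set 'I_n} | #|A| == d]].

Definition J_gens (k : nat) (g : mpoly) : Prop :=
  (exists i, [/\ (1 <= i)%N, (i <= n)%N & g = hcomplete k i]) \/
  (exists d, [/\ (n - k + 1 <= d)%N, (d <= n)%N & g = elem d]).
Definition J_ideal (k : nat) : mpoly -> Prop := in_ideal (J_gens k).

(* Z_{n,k} for distinct alpha_1..alpha_{n+k-1}, stored 0-indexed as
   alpha : 'I_(n+k-1) -> F.  Coordinate i (0-indexed) must lie in
   {alpha_0,...,alpha_(k+i-1)} (i.e. index < k + i). *)
Definition Z_set (k : nat) (alpha : 'I_(n + k - 1) -> F) (z : 'I_n -> F) : Prop :=
  [/\ (forall i : 'I_n, exists j : 'I_(n + k - 1), (nat_of_ord j < k + i)%N /\ z i = alpha j),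
      injective z &
      (forall j : 'I_(n + k - 1), (nat_of_ord j < k)%N -> exists i, z i = alpha j)].

End MPoly.

(* Main.v *)
Require Import Defs.
From HB Require Import structures.
From mathcomp Require Import all_boot all_order all_algebra.
From mathcomp Require Import ring zify.
Set Implicit Arguments. Unset Strict Implicit. Unset Printing Implicit Defensive.
Import Order.TTheory GRing.Theory Num.Theory.
Local Open Scope ring_scope.



Section Gen.
Variables (F : fieldType) (n : nat).
Implicit Types (p q : mpoly F n) (m : monom n) (z : 'I_n -> F).

Definition mv z m : F := \prod_(i < n) z i ^+ m i.

Lemma peval_cat p q z : peval (p ++ q) z = peval p z + peval q z.
Proof. by rewrite /peval big_cat. Qed.

Lemma coef_cat p q m : Defs.coef (p ++ q) m = Defs.coef p m + Defs.coef q m.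
Proof. by rewrite /Defs.coef big_cat. Qed.

Definition pscale (c : F) p : mpoly F n := [seq (c * t.1, t.2) | t <- p].

Lemma peval_pscale c p z : peval (pscale c p) z = c * peval p z.
Proof. rewrite /peval big_map mulr_sumr; apply: eq_bigr => t _ /=; by rewrite mulrA. Qed.

Lemma peval_flatten (ps : seq (mpoly F n)) z :
  peval (flatten ps) z = \sum_(p <- ps) peval p z.
Proof.
elim: ps => [|p ps IH] /=; first by rewrite /peval !big_nil.
by rewrite peval_cat IH big_cons.
Qed.

Lemma peval_nil z : @peval F n [::] z = 0.
Proof. by rewrite /peval big_nil. Qed.

Lemma peval_coef p z (s : seq (monom n)) : uniq s -> {subset map snd p <= s} ->
  peval p z = \sum_(m <- s) Defs.coef p m * mv z m.
Proof.
move=> us sub; rewrite /peval.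
transitivity (\sum_(t <- p) \sum_(m <- s) (if t.2 == m then t.1 * mv z m else 0)).
  apply: eq_big_seq => t tp.
  rewrite -[RHS]big_mkcond /= -[RHS]big_filter.
  have -> : [seq i <- s | t.2 == i] = [:: t.2].
    rewrite -(filter_pred1_uniq us (sub _ (map_f _ tp))).
    by apply: eq_filter => x /=; rewrite eq_sym.
  by rewrite big_seq1.
rewrite exchange_big; apply: eq_bigr => m _.
rewrite /Defs.coef mulr_suml [RHS]big_mkcond; apply: eq_bigr => t _.
by [].

Qed.

Lemma peq_peval p q z : (forall m, Defs.coef p m = Defs.coef q m) -> peval p z = peval q z.
Proof.
move=> h.
set s := undup (map snd (p ++ q)).
have us : uniq s by exact: undup_uniq.
rewrite (peval_coef z us) ?(peval_coef z us).
- by apply: eq_bigr => m _; rewrite h.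
- by move=> x hx; rewrite mem_undup map_cat mem_cat hx orbT.
- by move=> x hx; rewrite mem_undup map_cat mem_cat hx.
Qed.

Lemma coef_nil m : @Defs.coef F n [::] m = 0.
Proof. by rewrite /Defs.coef big_nil. Qed.

Lemma coef_notin p m : m \notin map snd p -> Defs.coef p m = 0.
Proof.
move=> hm; rewrite /Defs.coef big1_seq // => t /andP [/eqP ht tp].
by move: hm; rewrite -ht map_f.
Qed.

Lemma coef_uniq p t : uniq (map snd p) -> t \in p -> Defs.coef p t.2 = t.1.
Proof.
elim: p => [|u p IH] //= /andP [hu up]; rewrite in_cons => /orP [/eqP ->|tp].
  rewrite /Defs.coef big_cons eqxx -[RHS]addr0; congr (_ + _).
  exact: (coef_notin hu).
rewrite /Defs.coef big_cons ifF; first exact: IH.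
apply/negbTE; apply: contra hu => /eqP ->; exact: map_f.
Qed.

Definition emon (i : nat) : monom n := [ffun j : 'I_n => nat_of_bool (val j == i)].
Definition pshift (i : nat) p : mpoly F n := [seq (t.1, madd (emon i) t.2) | t <- p].

Lemma mv_shift (i : 'I_n) z m : mv z (madd (emon i) m) = z i * mv z m.
Proof.
rewrite /mv.
under eq_bigr do rewrite !ffunE exprD.
rewrite big_split /=; congr (_ * _).
rewrite (bigD1 i) //= eqxx expr1 big1 ?mulr1 // => j ji.
by rewrite (_ : (val j == val i) = false) // (inj_eq val_inj) (negbTE ji).
Qed.

Lemma peval_pshift (i : 'I_n) p z : peval (pshift i p) z = z i * peval p z.
Proof.
rewrite /peval big_map mulr_sumr; apply: eq_bigr => t _ /=.
by move: (mv_shift i z t.2); rewrite /mv => ->; rewrite mulrCA.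
Qed.

Definition msub (m : monom n) (i : 'I_n) : monom n :=
  [ffun j => if j == i then (m j).-1 else m j].

Lemma coef_pshift (i : 'I_n) p m :
  Defs.coef (pshift i p) m = if (0 < m i)%N then Defs.coef p (msub m i) else 0.
Proof.
rewrite /Defs.coef big_map /=.
case: posnP => hm.
  rewrite big1 // => t /eqP ht.
  by move: hm; rewrite -ht ffunE ffunE eqxx.
apply: eq_bigl => t /=; apply/eqP/eqP => [<-|->].
  apply/ffunP => j; rewrite !ffunE.
  case: eqP => [->|/eqP hj]; first by rewrite eqxx.
  by rewrite (_ : (val j == val i) = false) // (inj_eq val_inj) (negbTE hj).
apply/ffunP => j; rewrite !ffunE.
case: (j =P i) => [->|/eqP hj]; first by rewrite !eqxx /=; lia.
by rewrite (_ : (val j == val i) = false) // (inj_eq val_inj) (negbTE hj).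
Qed.

Lemma mdeg_madd m1 m2 : mdeg (madd m1 m2) = (mdeg m1 + mdeg m2)%N.
Proof. by rewrite /mdeg -big_split; apply: eq_bigr => j _; rewrite ffunE. Qed.

Lemma mdeg_emon i : (mdeg (emon i) <= 1)%N.
Proof.
rewrite /mdeg; case: (ltnP i n) => h.
  rewrite (bigD1 (Ordinal h)) //= ffunE eqxx big1 // => j hj.
  rewrite ffunE; apply/eqP; rewrite eqb0; apply: contra hj => /eqP hj.
  by apply/eqP; apply: val_inj.
rewrite big1 // => j _; rewrite ffunE; apply/eqP; rewrite eqb0.
by apply/eqP => hj; move: (ltn_ord j); rewrite hj ltnNge h.
Qed.

Lemma tau_split (g L : mpoly F n) (D : nat) :
  (forall t, t \in g -> mdeg t.2 = D) -> (forall t, t \in L -> (mdeg t.2 < D)%N) ->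
  (exists m, Defs.coef g m != 0) -> tau (g ++ L) = g /\ pnonzero (g ++ L).
Proof.
move=> hg hL [m hm].
have [t tg tm] : exists2 t, t \in g & t.2 = m.
  case: (boolP (m \in map snd g)) => [/mapP [t tg ->]|hm']; first by exists t.
  by move: hm; rewrite coef_notin ?eqxx.
have cL : forall m', mdeg m' = D -> Defs.coef L m' = 0.
  move=> m' hm'; apply: coef_notin; apply/mapP => [[u uL eu]].
  by move: (hL u uL); rewrite -eu hm' ltnn.
have ceq : forall m', mdeg m' = D -> Defs.coef (g ++ L) m' = Defs.coef g m'.
  by move=> m' hm'; rewrite coef_cat cL ?addr0.
have hmD : mdeg m = D by rewrite -tm hg.
have hpdeg : pdeg (g ++ L) = D.
  apply/eqP; rewrite eqn_leq; apply/andP; split.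
    apply/bigmax_leqP_seq => u; rewrite mem_cat => /orP [ug|uL] _.
      by rewrite hg.
    exact: ltnW (hL u uL).
  have tgL : t \in g ++ L by rewrite mem_cat tg.
  rewrite -{1}hmD -tm; apply: leq_bigmax_seq => //.
  by rewrite tm ceq.
split; last by exists m; rewrite ceq.
rewrite /tau hpdeg filter_cat.
rewrite (eq_in_filter (a2 := predT)) ?filter_predT; last by move=> u ug /=; rewrite (hg u ug) eqxx.
rewrite (eq_in_filter (a2 := pred0)) ?filter_pred0 ?cats0 // => u uL /=.
by apply/negbTE; rewrite neq_ltn hL.
Qed.

End Gen.



Section DD.
Variables (F : fieldType) (zs a : nat -> F).

Fixpoint gv (i k : nat) : F :=
  match i with
  | 0 => if k is 0 then 1 else 0
  | i'.+1 => (fix g k := match k with 0 => 1 | k'.+1 => gv i' k + (zs i' - a (i' + k')) * g k' end) k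
  end.

Lemma gv00 : gv 0 0 = 1. Proof. by []. Qed.
Lemma gv0S k : gv 0 k.+1 = 0. Proof. by []. Qed.
Lemma gvS0 i : gv i.+1 0 = 1. Proof. by []. Qed.
Lemma gvSS i k : gv i.+1 k.+1 = gv i k.+1 + (zs i - a (i + k)) * gv i.+1 k.
Proof. by []. Qed.

Definition W i : {poly F} := \prod_(j < i) ('X - (zs j)%:P).
Definition P m : {poly F} := \prod_(l < m) ('X - (a l)%:P).
Definition DD (p : {poly F}) i : F := (p %% W i)`_i.-1.

Lemma W_monic i : W i \is monic. Proof. exact: monic_prod_XsubC. Qed.
Lemma W_S i : W i.+1 = W i * ('X - (zs i)%:P). Proof. by rewrite /W big_ord_recr. Qed.
Lemma size_W i : size (W i) = i.+1.
Proof.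
elim: i => [|i IH]; first by rewrite /W big_ord0 size_poly1.
by rewrite W_S size_Mmonic ?monicXsubC ?monic_neq0 ?W_monic // IH size_XsubC addn2.
Qed.
Lemma W_top i : (W i)`_i = 1.
Proof. by have /monicP := W_monic i; rewrite /lead_coef size_W. Qed.
Lemma W_neq0 i : W i != 0. Proof. exact: monic_neq0 (W_monic i). Qed.

Lemma DD0 p : DD p 0 = 0.
Proof. by rewrite /DD /W big_ord0 modp1 coef0. Qed.

Lemma DD_mod p i : DD (p %% W i) i = DD p i.
Proof. by rewrite /DD modp_id. Qed.

Lemma DD_leib (c : F) Q i :
  DD (('X - c%:P) * Q) i.+1 = (zs i - c) * DD Q i.+1 + DD Q i.
Proof.
set R := Q %% W i.+1.
have hQ : Q = (Q %/ W i.+1) * W i.+1 + R by exact: divp_eq.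
have sR : (size R <= i.+1)%N.
  by have := ltn_modpN0 Q (W_neq0 i.+1); rewrite size_W ltnS.
have R0 : forall j, (i.+1 <= j)%N -> R`_j = 0 by apply/leq_sizeP.
set r := R`_i.
have Wc : forall j, (i.+2 <= j)%N -> (W i.+1)`_j = 0.
  by apply/leq_sizeP; rewrite size_W.
have Wc' : forall j, (i.+1 <= j)%N -> (W i)`_j = 0.
  by apply/leq_sizeP; rewrite size_W.
rewrite {1}/DD.
have -> : (('X - c%:P) * Q) %% W i.+1 = (('X - c%:P) * R) %% W i.+1.
  rewrite {1}hQ mulrDr modpD mulrA modp_mull add0r //.
set S := ('X - c%:P) * R - r%:P * W i.+1.
have eS : ('X - c%:P) * R = r%:P * W i.+1 + S by rewrite /S; ring.
have sS : (size S < size (W i.+1))%N.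
  rewrite size_W ltnS; apply/leq_sizeP => j hj.
  rewrite /S mulrBl coefB coefB coefXM coefCM coefCM.
  case: (ltngtP j i.+1) => [|hj2|->].
  - by rewrite ltnNge hj.
  - have h1 := R0 j hj. have h2 := Wc j hj2. have h3 : (i < j.-1)%N by lia.
    have h4 := R0 _ h3. case: eqP => _; rewrite h1 ?h4; move: h2 => /= ->; ring.
  - have h1 := R0 i.+1 (ltnSn _). have h2 := W_top i.+1. rewrite /= h1 /r; move: h2 => /= ->; ring.
rewrite eS modp_addl_mul_small //.
have -> : DD Q i.+1 = r by [].
have -> : DD Q i = (R - r%:P * W i)`_i.-1.
  rewrite /DD.
  have -> : Q %% W i = R %% W i.
    by rewrite {1}hQ W_S modpD [W i * _]mulrC mulrA modp_mull add0r.
  have eR : R = r%:P * W i + (R - r%:P * W i) by ring.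
  rewrite {1}eR modp_addl_mul_small // size_W ltnS.
  apply/leq_sizeP => j hj; rewrite coefB coefCM.
  case: (ltngtP j i) => [|hj2|->].
  - by rewrite ltnNge hj.
  - by rewrite R0 // Wc' // mulr0 subrr.
  - by rewrite W_top mulr1 subrr.
rewrite /S W_S mulrBl !coefB coefXM !coefCM mulrBr coefB coefMX coefMC /= W_top.
have er : r = R`_i by [].
clearbody r; clear S eS sS.
case: i R r R0 Wc Wc' sR hQ er => [|i] R r R0 Wc Wc' sR hQ er /=.
  rewrite /W big_ord0 coefC /= er. ring.
rewrite er; ring.
Qed.

Lemma P_S m : P m.+1 = ('X - (a m)%:P) * P m.
Proof. by rewrite /P big_ord_recr mulrC. Qed.

Lemma DD_P m i : DD (P m) i = if (i <= m.+1)%N then gv i (m.+1 - i) else 0.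
Proof.
elim: m i => [|m IH] [|i].
- by rewrite DD0.
- rewrite /DD /P big_ord0 modp_small; last by rewrite size_poly1 size_W.
  rewrite coefC; case: i => [|i] //=.
- by rewrite DD0 subn0.
- rewrite P_S DD_leib !IH.
  case: (ltngtP i m.+1) => [him|hmi|->].
  + rewrite ifT; last by rewrite ltnS ltnW.
    have him' : (i <= m)%N by rewrite -ltnS.
    rewrite !subSS subSn // gvSS subnKC //.
    by rewrite addrC.
  + rewrite ifF ?mulr0 ?addr0 //; apply/negbTE; rewrite -leqNgt; exact: hmi.
  + by rewrite ltnSn subnn subSS subnn gvS0 mulr0 add0r.
Qed.

Lemma DD_vanish m i : (forall j1 j2, (j1 < i)%N -> (j2 < i)%N -> zs j1 = zs j2 -> j1 = j2) ->
  (forall j, (j < i)%N -> exists2 l, (l < m)%N & zs j = a l) -> DD (P m) i = 0.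
Proof.
move=> inj hr.
have [q hq] : exists q, P m = q * \prod_(z <- [seq zs j | j <- iota 0 i]) ('X - z%:P).
  apply: uniq_roots_prod_XsubC.
- apply/allP => x /mapP [j]; rewrite mem_iota add0n => /andP [_ hj] ->.
  have [l hl ->] := hr j hj.
  rewrite /root /P horner_prod (bigD1 (Ordinal hl)) //= hornerXsubC subrr mul0r //.
- rewrite uniq_rootsE map_inj_in_uniq ?iota_uniq // => x y.
  rewrite !mem_iota !add0n => /andP [_ hx] /andP [_ hy]; exact: inj.
rewrite /DD hq big_map /W.
have -> : \prod_(j <- iota 0 i) ('X - (zs j)%:P) = \prod_(j < i) ('X - (zs j)%:P).
  by rewrite -(big_mkord xpredT (fun j => 'X - (zs j)%:P)) /index_iota subn0.
by rewrite modp_mull coef0.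
Qed.

Lemma gv_vanish i k : (1 <= i)%N -> (1 <= k)%N ->
  (forall j1 j2, (j1 < i)%N -> (j2 < i)%N -> zs j1 = zs j2 -> j1 = j2) ->
  (forall j, (j < i)%N -> exists2 l, (l < k + i - 1)%N & zs j = a l) -> gv i k = 0.
Proof.
move=> hi hk inj hr.
have := DD_vanish inj hr; rewrite DD_P.
have -> : (k + i - 1).+1 = k + i by rewrite -subSn ?subn1 // addn_gt0 hk.
by rewrite leq_addl addnK.
Qed.

End DD.



Section HC.
Variables (F : fieldType) (n : nat).
Implicit Types (p q : mpoly F n) (m : monom n) (z : 'I_n -> F).

Definition hb (d i : nat) (m : monom n) : bool :=
  (mdeg m == d) && [forall j : 'I_n, (i <= j)%N ==> (m j == 0%N)].

Lemma mdeg_ge m j : (m j <= mdeg m)%N.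
Proof. by rewrite /mdeg (bigD1 j) //= leq_addr. Qed.

Lemma coef_hc d i m : Defs.coef (hcomplete F n d i) m = (hb d i m)%:R.
Proof.
rewrite /Defs.coef /hcomplete big_map /= big_enum_cond /=.
case hm: (hb d i m).
  have md : forall j, (m j < d.+1)%N.
    by move=> j; rewrite ltnS; move/andP: hm => [/eqP <- _]; exact: mdeg_ge.
  pose x0 : {ffun 'I_n -> 'I_d.+1} := [ffun j => Ordinal (md j)].
  rewrite (big_pred1 x0) //= => x /=.
  apply/andP/eqP => [[_ /eqP hx]|->].
    apply/ffunP => j; apply: val_inj; rewrite ffunE /=.
    by rewrite -hx ffunE.
  have ex0 : [ffun j => nat_of_ord (x0 j)] = m by apply/ffunP => j; rewrite !ffunE.
  split; last by rewrite ex0.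
  move/andP: hm => [/eqP hd hf]; apply/andP; split.
    have -> : (\sum_(j < n) nat_of_ord (x0 j))%N = mdeg m.
      by rewrite /mdeg; apply: eq_bigr => j _; rewrite ffunE.
    by rewrite hd.
  apply/forallP => j; apply/implyP => hj; rewrite ffunE /=.
  by move/forallP: hf => /(_ j) /implyP /(_ hj).
rewrite big_pred0 // => x /=; apply/negbTE; apply/negP => /andP [/andP [hs hf] /eqP hx].
move/negbT: hm; rewrite /hb negb_and => /orP [] /negP; apply.
  by rewrite -hx /mdeg; under eq_bigr do rewrite ffunE.
apply/forallP => j; apply/implyP => hj; rewrite -hx ffunE.
by move/forallP: hf => /(_ j) /implyP /(_ hj).
Qed.

Lemma mdeg_hc d i t : t \in hcomplete F n d i -> mdeg t.2 = d.
Proof.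
move=> /mapP [x]; rewrite mem_enum => /andP [/eqP hs _] -> /=.
rewrite /mdeg; under eq_bigr do rewrite ffunE; exact: hs.
Qed.

Lemma mdeg_msub m (i : 'I_n) : (0 < m i)%N -> mdeg m = (mdeg (msub m i)).+1.
Proof.
move=> hm; rewrite /mdeg (bigD1 i) //= [in RHS](bigD1 i) //= ffunE eqxx.
have -> : (\sum_(j | j != i) msub m i j = \sum_(j | j != i) m j)%N.
  by apply: eq_bigr => j hj; rewrite ffunE (negbTE hj).
by rewrite -addSn prednK.
Qed.

Lemma hc_coef_rec (i : 'I_n) d m :
  Defs.coef (hcomplete F n d.+1 i.+1) m =
  Defs.coef (hcomplete F n d.+1 i ++ pshift i (hcomplete F n d i.+1)) m.
Proof.
rewrite coef_cat coef_pshift !coef_hc.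
case: posnP => hm.
  rewrite addr0; congr (_%:R); rewrite /hb; congr andb.
  apply: eq_forallb => j.
  case: (j =P i) => [->|/eqP hj]; first by rewrite ltnn leqnn hm.
  have hj' : (val j != val i) by [].
  rewrite (leq_eqVlt i); suff -> : (nat_of_ord i == nat_of_ord j) = false by [].
  by apply/eqP => h; move/eqP: hj; apply; apply: val_inj.
have -> : hb d.+1 i m = false.
  apply/negbTE; rewrite /hb negb_and; apply/orP; right.
  apply/negP => /forallP /(_ i); rewrite leqnn /= => /eqP h.
  by rewrite h in hm.
rewrite add0r; congr (_%:R); rewrite /hb (mdeg_msub hm) eqSS; congr andb.
apply: eq_forallb => j; rewrite ffunE.
case: (j =P i) => [->|_] //; by rewrite ltnn.
Qed.

Lemma hc_rec (i : 'I_n) d z :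
  peval (hcomplete F n d.+1 i.+1) z =
  peval (hcomplete F n d.+1 i) z + z i * peval (hcomplete F n d i.+1) z.
Proof. by rewrite -peval_pshift -peval_cat; apply: peq_peval; exact: hc_coef_rec. Qed.

Definition mzero : monom n := [ffun _ => 0%N].

Lemma hc_0 i z : peval (hcomplete F n 0 i) z = 1.
Proof.
have -> : 1 = peval [:: (1 : F, mzero)] z.
  by rewrite /peval big_seq1 mul1r /mv; under eq_bigr do rewrite ffunE expr0; rewrite big1.
apply: peq_peval => m; rewrite coef_hc /Defs.coef big_cons big_nil /hb /=.
case: (m =P mzero) => [->|hm].
  rewrite eqxx /mdeg; under eq_bigr do rewrite ffunE.
  rewrite big1 //= addr0 (_ : [forall j, _] = true) //; apply/forallP => j; apply/implyP => _.
  by rewrite ffunE.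
rewrite (_ : (mdeg m == 0%N) = false) ?ifF //; first by apply/eqP => h; apply: hm.
apply/negbTE; apply/negP => hmd; apply: hm; move: hmd.
rewrite /mdeg sum_nat_eq0 => /forallP h; apply/ffunP => j; rewrite ffunE.
by apply/eqP; exact: h.
Qed.

Lemma hc_S0 d z : peval (hcomplete F n d.+1 0) z = 0.
Proof.
rewrite -(peval_nil z); apply: peq_peval => m.
rewrite coef_hc coef_nil /hb.
case: (boolP [forall j : 'I_n, _]) => [/forallP h|]; last by rewrite andbF.
rewrite (_ : mdeg m = 0%N) ?andbT //.
by apply/eqP; rewrite /mdeg sum_nat_eq0; apply/forallP => j; exact: (implyP (h j)).
Qed.

Variable a : nat -> F.

Fixpoint Glow (i k : nat) : mpoly F n :=
  match i with
  | 0 => [::]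
  | i'.+1 => (fix gl k := match k with 0 => [::]
      | k'.+1 => Glow i' k ++ pshift i' (gl k') ++ pscale (- a (i' + k')) (hcomplete F n k' i ++ gl k') end) k
  end.

Lemma Glow0 k : Glow 0 k = [::]. Proof. by []. Qed.
Lemma GlowS0 i : Glow i.+1 0 = [::]. Proof. by []. Qed.
Lemma GlowSS i k : Glow i.+1 k.+1 =
  Glow i k.+1 ++ pshift i (Glow i.+1 k) ++ pscale (- a (i + k)) (hcomplete F n k i.+1 ++ Glow i.+1 k).
Proof. by []. Qed.

Lemma mdeg_Glow i k t : t \in Glow i k -> (mdeg t.2 < k)%N.
Proof.
elim: i k t => [|i IHi] k t; first by rewrite Glow0.
elim: k t => [|k IHk] t; first by rewrite GlowS0.
rewrite GlowSS !mem_cat => /orP [/IHi //|/orP [|]].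
  move=> /mapP [u /IHk hu ->] /=; rewrite mdeg_madd.
  move: (@mdeg_emon n i) => h; rewrite -addnS -(add1n k); exact: leq_add h hu.
move=> /mapP [u]; rewrite mem_cat => /orP [/mdeg_hc hu|/IHk hu] -> /=; [by rewrite hu | exact: leqW].
Qed.

Variable z : 'I_n -> F.
Definition zs (j : nat) : F := if insub j is Some o then z o else 0.
Lemma zsE (o : 'I_n) : zs o = z o. Proof. by rewrite /zs valK. Qed.

Lemma peval_G i : (i <= n)%N -> forall k,
  peval (hcomplete F n k i ++ Glow i k) z = gv zs a i k.
Proof.
elim: i => [|i IHi] hi k.
  rewrite Glow0 cats0; case: k => [|k]; first by rewrite hc_0.
  by rewrite hc_S0.
elim: k => [|k IHk].
  by rewrite GlowS0 cats0 hc_0.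
have hi' : (i < n)%N by [].
rewrite gvSS GlowSS -IHi ?(ltnW hi) // -IHk.
rewrite !peval_cat (hc_rec (Ordinal hi')) (peval_pshift (Ordinal hi')) peval_pscale !peval_cat.
rewrite -(zsE (Ordinal hi')) /=.
ring.
Qed.

End HC.



Section EL.
Variables (F : fieldType) (n : nat).

Definition ev (z : 'I_n -> F) d : F := \sum_(A : {set 'I_n} | #|A| == d) \prod_(j in A) z j.

Lemma peval_elem d z : peval (elem F n d) z = ev z d.
Proof.
rewrite /peval /elem big_map big_enum /=; apply: eq_bigr => A _.
rewrite mul1r (bigID (fun j => j \in A)) /= [X in _ * X]big1 ?mulr1.
  by apply: eq_bigr => j hj; rewrite ffunE hj expr1.
by move=> j /negbTE hj; rewrite ffunE hj expr0.
Qed.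

Lemma mdeg_elem d t : t \in elem F n d -> mdeg t.2 = d.
Proof.
move=> /mapP [A]; rewrite mem_enum => /eqP hA -> /=.
rewrite /mdeg -hA -sum1_card [RHS]big_mkcond /=; apply: eq_bigr => j _.
by rewrite ffunE; case: (j \in A).
Qed.

Lemma elem_nz d : (d <= n)%N -> exists m, Defs.coef (elem F n d) m != 0.
Proof.
move=> hd.
pose A : {set 'I_n} := [set j : 'I_n | (j < d)%N].
have cA : #|A| = d.
  have wi : injective (widen_ord hd) by move=> x y /(congr1 val) /= h; exact: val_inj.
  have <- : #|[set widen_ord hd x | x : 'I_d]| = d by rewrite card_imset // card_ord.
  apply: eq_card => j; apply/idP/imsetP => [|[x _ ->]]; last first.
    by rewrite inE /= ltn_ord.
  rewrite inE => hj; exists (Ordinal hj) => //; exact: val_inj.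
exists [ffun j => nat_of_bool (j \in A)].
have -> : [ffun j => nat_of_bool (j \in A)] = (1 : F, [ffun j => nat_of_bool (j \in A)]).2 by [].
rewrite coef_uniq ?oner_neq0 //.
  rewrite /elem -map_comp map_inj_in_uniq ?enum_uniq // => B C _ _ /= h.
  apply/setP => j; move/ffunP: h => /(_ j); rewrite !ffunE.
  by case: (j \in B); case: (j \in C).
apply/mapP; exists A => //; by rewrite mem_enum inE cA.
Qed.

Lemma Erev_coef (z : 'I_n -> F) d :
  (\prod_(j < n) ((z j)%:P * 'X + 1))`_d = ev z d.
Proof.
rewrite bigA_distr coef_sum /ev [RHS]big_mkcond /=; apply: eq_bigr => A _.
have -> : \prod_(i < n) (if i \in A then (z i)%:P * 'X else 1) =
          (\prod_(i in A) z i)%:P * 'X^#|A|.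
  rewrite -big_mkcond /= big_split /= prodr_const rmorph_prod //.
rewrite coefCM coefXn eq_sym; case: eqP => _; by rewrite ?mulr1 ?mulr0.
Qed.

Variable k : nat.
Definition Cp (b : 'I_k -> F) : {poly F} :=
  \prod_(l < k) \sum_(r < n.+1) ((- b l)%:P * 'X) ^+ r.

Lemma Cp0 b : (Cp b)`_0 = 1.
Proof.
rewrite /Cp coef0_prod; apply: big1 => l _.
rewrite coef_sum big_ord_recl /= expr0 coefC /= big1 ?addr0 // => r _.
by rewrite exprMn -rmorphXn coefCM coefXn /= mulr0.
Qed.

Lemma elem_vanish (b : 'I_k -> F) (z : 'I_n -> F) :
  injective b -> (forall l, exists i, z i = b l) ->
  forall d, (n - k < d)%N -> (d <= n)%N ->
  (\prod_(j < n) ((z j)%:P * 'X + 1) * Cp b)`_d = 0.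
Proof.
move=> hb hcov d hd1 hd2.
have hcov' : forall l, exists i, z i == b l by move=> l; have [i hi] := hcov l; exists i; rewrite hi.
pose s l := xchoose (hcov' l).
have hs : forall l, z (s l) = b l by move=> l; exact: (eqP (xchooseP (hcov' l))).
have sinj : injective s by move=> l1 l2 h; apply: hb; rewrite -!hs h.
pose S := [set s l | l : 'I_k].
have cS : #|S| = k by rewrite card_imset // card_ord.
have cSc : #|~: S| = (n - k)%N by rewrite cardsCs setCK card_ord cS.
rewrite (bigID (fun j => j \in S)) /=.
have -> : \prod_(j < n | j \in S) ((z j)%:P * 'X + 1) = \prod_(l < k) ((b l)%:P * 'X + 1).
  rewrite /S (big_imset (fun j => (z j)%:P * 'X + 1) (in2W sinj)) /=.
  by apply: eq_big => // l; rewrite hs.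
set R := \prod_(j < n | j \notin S) _.
have sR : (size R <= (n - k).+1)%N.
  rewrite /R size_prod; last first.
    move=> j _; apply/eqP => h; move: (congr1 (fun p : {poly F} => p`_0) h).
    by rewrite coefD coefMX /= coefC /= add0r coef0 => /eqP; rewrite oner_eq0.
  have hc : #|(fun i : 'I_n => i \notin S)| = (n - k)%N by rewrite -cSc; apply: eq_card => j; rewrite inE.
  rewrite hc.
  have : (\sum_(j < n | j \notin S) size (((z j)%:P * 'X + 1)%R) <= 2 * (n - k))%N.
    rewrite -hc.
    rewrite mulnC -sum_nat_const; apply: leq_sum => j _.
    by rewrite (_ : (z j)%:P * 'X + 1 = (z j)%:P * 'X + (1:F)%:P) ?polyC1 // size_MXaddC; case: ifP => //; rewrite ltnS size_polyC leq_b1.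
  move=> h; rewrite leq_subLR; apply: leq_trans (_ : _ <= (2 * (n - k)).+1)%N _; first by rewrite ltnS.
  lia.
have [Q hQ] : exists Q, \prod_(l < k) (((b l)%:P * 'X + 1) * \sum_(r < n.+1) ((- b l)%:P * 'X) ^+ r)
            = 1 + 'X^(n.+1) * Q.
  apply: (big_ind (fun p => exists Q, p = 1 + 'X^(n.+1) * Q)).
  - by exists 0; rewrite mulr0 addr0.
  - move=> p1 p2 [Q1 ->] [Q2 ->]; exists (Q1 + Q2 + 'X^(n.+1) * Q1 * Q2); ring.
  - move=> l _; exists (- ((- b l)%:P ^+ n.+1)).
    have e := subrX1 ((- b l)%:P * 'X) n.+1.
    have -> : (b l)%:P * 'X + 1 = - ((- b l)%:P * 'X - 1) by rewrite polyCN; ring.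
    rewrite mulNr -e exprMn; ring.
rewrite /Cp mulrAC.
have -> : \prod_(l < k) ((b l)%:P * 'X + 1) * \prod_(l < k) \sum_(r < n.+1) ((- b l)%:P * 'X) ^+ r = \prod_(l < k) (((b l)%:P * 'X + 1) * \sum_(r < n.+1) ((- b l)%:P * 'X) ^+ r) by rewrite big_split.
rewrite hQ mulrC mulrDr mulr1 coefD mulrCA coefXnM.
rewrite ltnS hd2 addr0; move/leq_sizeP: sR; apply; lia.
Qed.

Lemma elem_eval (b : 'I_k -> F) (z : 'I_n -> F) d :
  peval (elem F n d ++ flatten [seq pscale ((Cp b)`_(d - d')) (elem F n d') | d' <- iota 0 d]) z
  = (\prod_(j < n) ((z j)%:P * 'X + 1) * Cp b)`_d.
Proof.
rewrite peval_cat peval_flatten big_map coefM big_ord_recr /= subnn Cp0 mulr1.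
rewrite Erev_coef peval_elem addrC; congr (_ + _).
rewrite -(big_mkord xpredT (fun j => (\prod_(j0 < n) ((z j0)%:P * 'X + 1))`_j * (Cp b)`_(d - j))).
rewrite /index_iota subn0; apply: eq_bigr => d' _.
by rewrite peval_pscale peval_elem Erev_coef mulrC.
Qed.

End EL.



Theorem mainTheorem3 (F : fieldType) (n k : nat) (hk : (1 <= k)%N) (hkn : (k <= n)%N)
    (alpha : 'I_(n + k - 1) -> F) (halpha : injective alpha) :
  forall g : mpoly F n, J_ideal k g -> T_ideal (Z_set alpha) g.
Proof.
have key : forall g : mpoly F n, J_gens k g ->
    exists f, [/\ vanishing_ideal (Z_set alpha) f, pnonzero f & g = tau f].
  move=> g [[i [hi1 hin ->]] | [d [hd1 hdn ->]]].
  - pose a (l : nat) := if insub l is Some o then alpha o else 0.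
    have aE : forall o, a (nat_of_ord o) = alpha o by move=> o; rewrite /a valK.
    have hw : exists m, Defs.coef (hcomplete F n k i) m != 0.
      have hn0 : (0 < n)%N by apply: leq_trans hin.
      pose m0 : monom n := [ffun j : 'I_n => if nat_of_ord j == 0%N then k else 0%N].
      exists m0; rewrite coef_hc.
      suff -> : hb k i m0 by rewrite oner_neq0.
      apply/andP; split.
        rewrite /mdeg (bigD1 (Ordinal hn0)) //= ffunE /= big1 ?addn0 // => j hj.
        rewrite ffunE; case: eqP => // h0; case/negP: hj; apply/eqP; exact: val_inj.
      apply/forallP => j; apply/implyP => hj; rewrite ffunE.
      case: (nat_of_ord j =P 0%N) => [h0|//].
      by move: hj; rewrite h0 leqn0 => /eqP hi0; move: hi1; rewrite hi0.
    have [ht hnz] := @tau_split F n (hcomplete F n k i) (Glow n a i k) k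
       (@mdeg_hc F n k i) (@mdeg_Glow F n a i k) hw.
    exists (hcomplete F n k i ++ Glow n a i k); split => //.
    move=> z [hz1 hz2 hz3]; rewrite (peval_G a z hin k).
    apply: gv_vanish => //.
    + move=> j1 j2 h1 h2.
      have h1' : (j1 < n)%N by apply: leq_trans hin.
      have h2' : (j2 < n)%N by apply: leq_trans hin.
      rewrite -[j1]/(nat_of_ord (Ordinal h1')) -[j2]/(nat_of_ord (Ordinal h2')) !zsE.
      by move=> /hz2 /(congr1 val).
    + move=> j hj.
      have hj' : (j < n)%N by apply: leq_trans hin.
      have [l [hl hzl]] := hz1 (Ordinal hj').
      exists (nat_of_ord l); first by move: hl => /=; lia.
      by rewrite -[j]/(nat_of_ord (Ordinal hj')) zsE hzl aE.
  - have hkN : (k <= n + k - 1)%N by lia.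
    pose b (l : 'I_k) := alpha (widen_ord hkN l).
    have hb : injective b.
      by move=> x y /halpha /(congr1 val) /= h; apply: val_inj.
    pose L := flatten [seq pscale ((Cp n b)`_(d - d')) (elem F n d') | d' <- iota 0 d].
    have hL : forall t, t \in L -> (mdeg t.2 < d)%N.
      move=> t /flattenP [p /mapP [d' hd' ->]] /mapP [u hu ->] /=.
      rewrite (mdeg_elem hu); move: hd'; rewrite mem_iota; lia.
    have [ht hnz] := @tau_split F n (elem F n d) L d (@mdeg_elem F n d) hL (elem_nz F hdn).
    exists (elem F n d ++ L); split => //.
    move=> z [hz1 hz2 hz3]; rewrite /L elem_eval; apply: elem_vanish => //.
    + move=> l; have [i hi] := hz3 (widen_ord hkN l) (ltn_ord l); by exists i.
    + lia.
move=> g [hs [hS heq]]; exists hs; split => // x /hS; exact: key.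
Qed.
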